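(* Let $\mathbf A\in\mathbb R^{m\times n}$, let $k\ge 1$ be an integer, and let $\alpha>0$ and $c>0$ be fixed. The following are equivalent: (i) for every $k$-sparse vector $\mathbf x^0\in\mathbb R^n$ with $\|\mathbf x^0\|_\infty=c$, the vector $\mathbf x^0$ is the unique minimizer of problem (P2) with $\mathbf b=\mathbf A\mathbf x^0$; (ii) for every $\mathbf h\in\mathrm{Null}(\mathbf A)$ and every coordinate set $\mathcal S\subset\{1,\dots,n\}$ with $|\mathcal S|\le k$, $$\Big(1+\frac{c}{\alpha}\Big)\|\mathbf h_{\mathcal S}\|_1\le \|\mathbf h_{\mathcal S^c}\|_1 .$$
   Context: Problem (P2) is $\min_{\mathbf x\in\mathbb R^n}\{\|\mathbf x\|_1+\frac{1}{2\alpha}\|\mathbf x\|_2^2:\ \mathbf A\mathbf x=\mathbf b\}$. A vector is $k$-sparse if it has at most $k$ nonzero entries. For a vector $\mathbf h$ and index set $\mathcal S$, $\mathbf h_{\mathcal S}$ denotes the restriction of $\mathbf h$ to the coordinates in $\mathcal S$, and $\mathcal S^c=\{1,\dots,n\}\setminus\mathcal S$. *)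

(* Defs.v *)
(* Real numbers are an arbitrary realFieldType R
   (instantiating R with the reals gives the paper's statement). *)
From HB Require Import structures.
From mathcomp Require Import all_boot all_order all_algebra.
Set Implicit Arguments. Unset Strict Implicit. Unset Printing Implicit Defensive.
Import Order.TTheory GRing.Theory Num.Theory.
Local Open Scope ring_scope.

Section Defs.
Variable R : realFieldType.

Definition norm1 n (x : 'cV[R]_n) : R := \sum_(i < n) `|x i ord0|.
Definition norm2sq n (x : 'cV[R]_n) : R := \sum_(i < n) (x i ord0) ^+ 2.
Definition norminf n (x : 'cV[R]_n) : R := \big[Num.max/0]_(i < n) `|x i ord0|.

Definition ksparse n (k : nat) (x : 'cV[R]_n) : bool :=
  (#|[set i : 'I_n | x i ord0 != 0%R]| <= k)%N.

Definition restrict n (h : 'cV[R]_n) (S : {set 'I_n}) : 'cV[R]_n :=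
  \col_i (if i \in S then h i ord0 else 0).

Definition P2obj n (alpha : R) (x : 'cV[R]_n) : R :=
  norm1 x + (2 * alpha)^-1 * norm2sq x.

Definition P2_minimizer m n (A : 'M[R]_(m, n)) (b : 'cV[R]_m) (alpha : R)
    (x : 'cV[R]_n) : Prop :=
  A *m x = b /\ forall y : 'cV[R]_n, A *m y = b -> P2obj alpha x <= P2obj alpha y.

Definition P2_unique_minimizer m n (A : 'M[R]_(m, n)) (b : 'cV[R]_m) (alpha : R)
    (x : 'cV[R]_n) : Prop :=
  P2_minimizer A b alpha x /\
  forall y : 'cV[R]_n, P2_minimizer A b alpha y -> y = x.

End Defs.

(* Main.v *)
Require Import Defs.
From HB Require Import structures.
From mathcomp Require Import all_boot all_order all_algebra.
From mathcomp Require Import ring lra.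
Import Order.TTheory GRing.Theory Num.Theory.
Local Open Scope ring_scope.


Lemma coord_ineq (R : realFieldType) (x h a c : R) : 0 < a -> `|x| <= c ->
  a*h^+2 - (1+2*a*c)*`|h| <= `|x+h| - `|x| + a*((x+h)^+2 - x^+2).
Proof.
move=> ha hxc.
have h1 : `|x| - `|h| <= `|x+h| by rewrite lerB_normD.
have h2 : - (c * `|h|) <= x * h.
  have : `|x * h| <= c * `|h| by rewrite normrM ler_wpM2r.
  have : - `|x*h| <= x*h by rewrite lerNnormlW.
  lra.
have h3 : a * (- (c * `|h|)) <= a * (x * h) by rewrite ler_wpM2l // ltW.
nra.
Qed.

Lemma norm1_ge0 (R : realFieldType) n (x : 'cV[R]_n) : 0 <= norm1 x.
Proof. by apply: sumr_ge0 => i _; rewrite normr_ge0. Qed.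

Lemma norm2sq_ge0 (R : realFieldType) n (x : 'cV[R]_n) : 0 <= norm2sq x.
Proof. by apply: sumr_ge0 => i _; rewrite sqr_ge0. Qed.

Lemma norm2sq_eq0 (R : realFieldType) n (x : 'cV[R]_n) : norm2sq x = 0 -> x = 0.
Proof.
move=> /eqP; rewrite /norm2sq psumr_eq0; last by move=> i _; rewrite sqr_ge0.
move=> /allP H; apply/matrixP => i j; rewrite (ord1 j) mxE.
have := H i (mem_index_enum i); rewrite /= sqrf_eq0 => /eqP //.
Qed.

Lemma P2obj_diff (R : realFieldType) n (alpha : R) (x y : 'cV[R]_n) :
  P2obj alpha y - P2obj alpha x =
  \sum_i (`|y i ord0| - `|x i ord0| + (2*alpha)^-1 * ((y i ord0)^+2 - (x i ord0)^+2)).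
Proof.
rewrite /P2obj /norm1 /norm2sq big_split /= sumrB -mulr_sumr sumrB; ring.
Qed.

Lemma restr_split (R : realFieldType) n (h : 'cV[R]_n) (S : {set 'I_n}) (a q : R) :
  \sum_i (a * (h i ord0)^+2 + (`|restrict h (~: S) i ord0| - q * `|restrict h S i ord0|))
  = a * norm2sq h + (norm1 (restrict h (~: S)) - q * norm1 (restrict h S)).
Proof.
rewrite big_split /= sumrB -!mulr_sumr //.
Qed.

Lemma key (R : realFieldType) n (alpha c : R) (x h : 'cV[R]_n) : 0 < alpha ->
  (forall i, `|x i ord0| <= c) ->
  (1 + c/alpha) * norm1 (restrict h [set i | x i ord0 != 0])
     <= norm1 (restrict h (~: [set i | x i ord0 != 0])) ->
  (2*alpha)^-1 * norm2sq h <= P2obj alpha (x+h) - P2obj alpha x.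
Proof.
move=> ha hc hS.
set S := [set i | x i ord0 != 0] in hS *.
have hq : c / alpha = 2 * (2*alpha)^-1 * c.
  by field; rewrite gt_eqF.
have ha' : 0 < (2*alpha)^-1 by rewrite invr_gt0 mulr_gt0.
rewrite P2obj_diff.
apply: le_trans (_ : (2*alpha)^-1 * norm2sq h + (norm1 (restrict h (~: S)) -
   (1 + c/alpha) * norm1 (restrict h S)) <= _).
  by rewrite lerDl subr_ge0.
rewrite -restr_split; apply: ler_sum => i _.
rewrite !mxE in_setC inE.
case: (x i ord0 =P 0) => [->|nz] /=.
  rewrite /= normr0 mulr0 subr0 add0r subr0; lra.
rewrite /= normr0 sub0r hq.
have := @coord_ineq _ (x i ord0) (h i ord0) _ _ ha' (hc i); lra.
Qed.

Lemma limit_arg (R : realFieldType) (Q D t0 : R) : 0 < t0 -> 0 <= D ->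
  (forall t, 0 < t -> t <= t0 -> 0 <= Q + t*D) -> 0 <= Q.
Proof.
move=> ht0 hD H; rewrite leNgt; apply/negP => hQ.
set t := Num.min t0 (- Q / (2 * (D + 1))).
have hpos : 0 < - Q / (2 * (D + 1)) by rewrite divr_gt0 // ?oppr_gt0 // mulr_gt0 //; lra.
have tpos : 0 < t by rewrite lt_min ht0.
have tle : t <= t0 by rewrite ge_min lexx.
have tle2 : t * (2 * (D + 1)) <= - Q.
  rewrite -ler_pdivlMr; last by lra.
  by rewrite ge_min lexx orbT.
have := H t tpos tle; nra.
Qed.

Lemma le_norm1 (R : realFieldType) n (h : 'cV[R]_n) i : `|h i ord0| <= norm1 h.
Proof.
rewrite /norm1 (bigD1 i) //= lerDl; apply: sumr_ge0 => j _; exact: normr_ge0.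
Qed.

Lemma expand (R : realFieldType) n (alpha c t : R) (h x0 : 'cV[R]_n) (S : {set 'I_n}) :
  0 < alpha -> 0 < c -> 0 < t -> t * (1 + norm1 h) <= c ->
  (forall i, x0 i ord0 = if i \in S then (if 0 <= h i ord0 then - c else c) else 0) ->
  P2obj alpha (x0 + t *: h) - P2obj alpha x0 <=
  t * (norm1 (restrict h (~: S)) - (1 + c/alpha) * norm1 (restrict h S))
  + t^+2 * ((2*alpha)^-1 * norm2sq h).
Proof.
move=> ha hc ht htc hx0.
have hq : c / alpha = 2 * (2*alpha)^-1 * c by field; rewrite gt_eqF.
have ha' : 0 < (2*alpha)^-1 by rewrite invr_gt0 mulr_gt0.
set a := (2*alpha)^-1 in hq ha' *.
have -> : t * (norm1 (restrict h (~: S)) - (1 + c/alpha) * norm1 (restrict h S))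
  + t^+2 * (a * norm2sq h) = \sum_i (t * (`|restrict h (~: S) i ord0| -
      (1 + c/alpha) * `|restrict h S i ord0|) + t^+2 * (a * (h i ord0)^+2)).
  by rewrite big_split /= -!mulr_sumr sumrB -mulr_sumr.
rewrite P2obj_diff; apply: ler_sum => i _.
rewrite !mxE in_setC hq hx0.
have hi : t * `|h i ord0| <= c.
  apply: le_trans htc; rewrite ler_wpM2l ?ltW //; have := @le_norm1 _ _ h i; lra.
case: (i \in S) => /=; last first.
  rewrite normr0 mulr0 subr0 add0r subr0 normrM (gtr0_norm ht); rewrite -/a; lra.
have [hh|hh] := lerP 0 (h i ord0).
  rewrite (ger0_norm hh) in hi *.
  rewrite (ler0_norm); last by nra.
  rewrite normrN (gtr0_norm hc); rewrite normr0 -/a; lra.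
rewrite (ltr0_norm hh) in hi *.
rewrite (ger0_norm); last by nra.
rewrite (gtr0_norm hc); rewrite normr0 -/a; lra.
Qed.

Theorem mainTheorem1 (R : realFieldType) (m n : nat) (A : 'M[R]_(m, n))
    (k : nat) (alpha c : R) (hk : (1 <= k)%N) (halpha : 0 < alpha) (hc : 0 < c) :
  (forall x0 : 'cV[R]_n, ksparse k x0 -> norminf x0 = c ->
     P2_unique_minimizer A (A *m x0) alpha x0)
  <->
  (forall (h : 'cV[R]_n) (S : {set 'I_n}), A *m h = 0 -> (#|S| <= k)%N ->
     (1 + c / alpha) * norm1 (restrict h S) <= norm1 (restrict h (~: S))).
Proof.
have ha' : 0 < (2*alpha)^-1 by rewrite invr_gt0 mulr_gt0.
split.
- move=> Hi h S hAh hS.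
  case: (set_0Vmem S) => [->|[j hj]].
    have -> : norm1 (restrict h set0) = 0.
      by rewrite /norm1 big1 // => i _; rewrite mxE in_set0 normr0.
    by rewrite mulr0 norm1_ge0.
  set x0 : 'cV[R]_n := \col_i (if i \in S then (if 0 <= h i ord0 then - c else c) else 0).
  have hx0 : forall i, x0 i ord0 = if i \in S then (if 0 <= h i ord0 then - c else c) else 0.
    by move=> i; rewrite mxE.
  have supp : [set i | x0 i ord0 != 0] = S.
    apply/setP => i; rewrite !inE hx0; case: (i \in S); last by rewrite eqxx.
    by case: ifP; rewrite ?oppr_eq0 gt_eqF.
  have ksp : ksparse k x0 by rewrite /ksparse supp.
  have ninf : norminf x0 = c.
    apply/le_anti/andP; split.
      apply/bigmax_leP; split; first exact: ltW.
      move=> i _; rewrite hx0; case: ifP => _; last by rewrite normr0 ltW.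
      by case: ifP => _; rewrite ?normrN gtr0_norm.
    apply: (bigmax_sup j) => //; rewrite hx0 hj.
    by case: ifP => _; rewrite ?normrN gtr0_norm.
  have [[_ Hmin] _] := Hi x0 ksp ninf.
  rewrite -subr_ge0.
  have hn1 : 0 < 1 + norm1 h by have := @norm1_ge0 _ _ h; lra.
  apply: (@limit_arg _ _ ((2*alpha)^-1 * norm2sq h) (c / (1 + norm1 h))).
  + by rewrite divr_gt0.
  + by rewrite mulr_ge0 ?norm2sq_ge0 // ltW.
  move=> t ht htle.
  have hy : A *m (x0 + t *: h) = A *m x0 by rewrite mulmxDr -scalemxAr hAh scaler0 addr0.
  have htc : t * (1 + norm1 h) <= c by rewrite -ler_pdivlMr.
  have := Hmin _ hy.
  have := @expand _ _ alpha c t h x0 S halpha hc ht htc hx0.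
  move=> H1 H2.
  rewrite -(pmulr_rge0 _ ht).
  rewrite expr2 in H1.
  nra.
- move=> Hii x0 hks hninf.
  have hc' : forall i, `|x0 i ord0| <= c.
    by move=> i; rewrite -hninf; exact: le_bigmax.
  have Hkey : forall y, A *m y = A *m x0 ->
      (2*alpha)^-1 * norm2sq (y - x0) <= P2obj alpha y - P2obj alpha x0.
    move=> y hy; have := @key _ _ alpha c x0 (y - x0) halpha hc'.
    rewrite (addrC x0 (y - x0)) subrK; apply; apply: Hii => //.
    by rewrite mulmxBr hy subrr.
  split.
    split=> // y hy; have := Hkey y hy; have := @norm2sq_ge0 _ _ (y - x0).
    move=> H1 H2; have : 0 <= (2*alpha)^-1 * norm2sq (y - x0) by rewrite mulr_ge0 // ltW.
    lra.
  move=> y [hy Hm]; have := Hkey y hy; have := Hm x0 erefl.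
  have := @norm2sq_ge0 _ _ (y - x0) => H0 H1 H2.
  have : (2*alpha)^-1 * norm2sq (y - x0) <= 0 by lra.
  rewrite pmulr_rle0 // => H3.
  have /norm2sq_eq0 /eqP : norm2sq (y - x0) = 0 by apply/le_anti; rewrite H3 H0.
  by rewrite subr_eq0 => /eqP.
Qed.
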